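(* For the one-dimensional Euler equations, consider the blended scheme $u^{n+1}_k=u^n_k+\lambda(f_{\alpha_{k-\frac12}}-f_{\alpha_{k+\frac12}})$, $\lambda=\Delta t/\Delta x$, with $f_{\alpha_{k+\frac12}}=\alpha_{k+\frac12}g_{k+\frac12}+(1-\alpha_{k+\frac12})h_{k+\frac12}$. If Condition P is satisfied for cell $k$, i.e. \[ c_1\big(u^n_k+2\lambda(f_{\alpha_{k-\frac12}}-f(u^n_k))\big)\le0\quad\text{and}\quad c_1\big(u^n_k+2\lambda(f(u^n_k)-f_{\alpha_{k+\frac12}})\big)\le0 \] with $c_1(u)=-p(u)$, and the CFL restriction $\lambda c_{\max}<0.5$ holds, then \[ p\big(u^n_k+\lambda(f_{\alpha_{k-\frac12}}-f_{\alpha_{k+\frac12}})\big)\ge0. \]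
   Context: Euler equations of gas dynamics: $u=(\rho,\rho v,E)$, $f(u)=(\rho v,\rho v^2+p,v(E+p))$, $p=(\gamma-1)(E-\frac12\rho v^2)$, $\gamma>1$; for $\rho>0$ the pressure is concave in the conserved variables, so $c_1=-p$ is convex. $g$ is the numerical flux of a positivity preserving low-order scheme, $h$ a high-order numerical flux, $\alpha_{k\pm\frac12}\in[0,1]$, and $c_{\max}$ denotes the maximal wave speed. *)

(* Defs.v *)
From Stdlib Require Import Reals Lra.
Open Scope R_scope.

(* Conserved variables u = (rho, rho v, E) of the 1D Euler equations. *)
Record state := mkState { rho : R; mom : R; ener : R }.

Definition sadd (u w : state) : state :=
  mkState (rho u + rho w) (mom u + mom w) (ener u + ener w).
Definition sscale (c : R) (u : state) : state :=
  mkState (c * rho u) (c * mom u) (c * ener u).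
Definition ssub (u w : state) : state := sadd u (sscale (-1) w).

Definition vel (u : state) : R := mom u / rho u.

Definition pressure (gamma : R) (u : state) : R :=
  (gamma - 1) * (ener u - mom u ^ 2 / (2 * rho u)).

Definition c1_euler (gamma : R) (u : state) : R := - pressure gamma u.

Definition flux (gamma : R) (u : state) : state :=
  mkState (mom u)
          (mom u * vel u + pressure gamma u)
          (vel u * (ener u + pressure gamma u)).

Definition blend (alpha : R) (g h : state) : state :=
  sadd (sscale alpha g) (sscale (1 - alpha) h).

Definition wave_speed (gamma : R) (u : state) : R :=
  Rabs (vel u) + sqrt (gamma * pressure gamma u / rho u).

(* Main.v *)
Require Import Defs.
From Stdlib Require Import Reals Lra.
Open Scope R_scope.

Lemma conc g r1 m1 e1 r2 m2 e2 : 1 < g -> 0 < r1 -> 0 < r2 ->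
  0 <= pressure g (mkState r1 m1 e1) -> 0 <= pressure g (mkState r2 m2 e2) ->
  0 <= pressure g (mkState ((r1+r2)/2) ((m1+m2)/2) ((e1+e2)/2)).
Proof.
  unfold pressure; simpl; intros Hg H1 H2 P1 P2.
  assert (X1 : 0 <= e1 - m1^2/(2*r1)).
  { destruct (Rle_or_lt 0 (e1 - m1^2/(2*r1))) as [h|h]; auto; nra. }
  assert (X2 : 0 <= e2 - m2^2/(2*r2)).
  { destruct (Rle_or_lt 0 (e2 - m2^2/(2*r2))) as [h|h]; auto; nra. }
  assert (K : (m1^2/(2*r1) + m2^2/(2*r2))/2 - ((m1+m2)/2)^2/(2*((r1+r2)/2))
     = (m1*r2 - m2*r1)^2 / (4*r1*r2*(r1+r2))).
  { assert (r1 <> 0) by lra; assert (r2 <> 0) by lra; assert (r1+r2 <> 0) by lra.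
    field; auto. }
  assert (K2 : 0 <= (m1*r2 - m2*r1)^2 / (4*r1*r2*(r1+r2))).
  { apply Rmult_le_pos; [apply pow2_ge_0|].
    apply Rlt_le, Rinv_0_lt_compat. assert (0 < r1*r2) by nra. nra. }
  apply Rmult_le_pos; lra.
Qed.

Theorem lemma3p4
  (gamma lam cmax alpha_l alpha_r : R) (u g_l h_l g_r h_r : state) :
  1 < gamma ->
  0 < lam ->
  0 <= alpha_l <= 1 -> 0 <= alpha_r <= 1 ->
  0 < rho u ->
  0 <= pressure gamma u ->
  wave_speed gamma u <= cmax ->
  lam * cmax < / 2 ->
  let fl := blend alpha_l g_l h_l in
  let fr := blend alpha_r g_r h_r in
  let wl := sadd u (sscale (2 * lam) (ssub fl (flux gamma u))) in
  let wr := sadd u (sscale (2 * lam) (ssub (flux gamma u) fr)) in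
  0 < rho wl -> 0 < rho wr ->
  c1_euler gamma wl <= 0 -> c1_euler gamma wr <= 0 ->
  0 <= pressure gamma (sadd u (sscale lam (ssub fl fr))).
Proof.
  intros Hg _ _ _ _ _ _ _ fl fr wl wr Hl Hr Cl Cr.
  unfold c1_euler in Cl, Cr.
  assert (E : sadd u (sscale lam (ssub fl fr)) =
    mkState ((rho wl + rho wr)/2) ((mom wl + mom wr)/2) ((ener wl + ener wr)/2)).
  { unfold wl, wr, sadd, ssub, sscale; simpl. f_equal; field. }
  rewrite E. destruct wl as [a b c], wr as [d e f]; simpl in *.
  apply conc; auto; lra.
Qed.
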